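(* Let $\mathcal{D}=(\mathcal{P},\mathcal{B},\mathcal{I})$ be a quasi-symmetric $(v,b,r,k,\lambda_1,0)$ SPBIBD of type $(k-1,t)$ with intersection numbers $x=0$ and $y>0$. Then for every block $B\in\mathcal{B}$ there exist blocks $B_1,B_2\in\mathcal{B}$, distinct from $B$, such that $|B\cap B_1|=0$ and $|B\cap B_2|=y$.
   Context: A design $\mathcal{D}=(\mathcal{P},\mathcal{B},\mathcal{I})$ is an incidence structure with $|\mathcal{P}|=v$, $|\mathcal{B}|=b$, every block incident with exactly $k$ points and every point with exactly $r$ blocks; standing assumptions: $v>k$ and $r<b$. For blocks, $B\cap B'$ denotes the set of points incident with both. $(p,B)$ is a flag if $p\in B$, a non-flag otherwise. $\mathcal{D}$ is a $(v,b,r,k,\lambda_1,\lambda_2)$ SPBIBD of type $(s,t)$ if (i) any two distinct points are together in exactly $\lambda_1$ or exactly $\lambda_2$ blocks; (ii) for every flag $(p,B)$, the number of points of $B$ other than $p$ lying with $p$ in exactly $\lambda_1$ blocks is $s$; (iii) for every non-flag $(p,B)$, the number of points of $B$ lying with $p$ in exactly $\lambda_1$ blocks is $t$. $\mathcal{D}$ is quasi-symmetric with intersection numbers $x<y$ if any two distinct blocks share exactly $x$ or $y$ points and both values occur. *)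

(* Defs.v *)
From mathcomp Require Import all_boot.
Set Implicit Arguments. Unset Strict Implicit. Unset Printing Implicit Defensive.

(* An incidence structure: finite types of points P and blocks Bk (blocks are
   labels, so repeated blocks are allowed), and an incidence relation. *)
Section Design.
Variables (P Bk : finType) (I : P -> Bk -> bool).

Definition binter (B B' : Bk) : {set P} := [set p | I p B && I p B'].

Definition lam (p q : P) : nat := #|[set B | I p B && I q B]|.

Definition is_design (v b r k : nat) : Prop :=
  [/\ #|P| = v, #|Bk| = b,
      (forall B : Bk, #|[set p | I p B]| = k),
      (forall p : P, #|[set B | I p B]| = r)
    & (k < v) && (r < b)].

Definition is_SPBIBD (v b r k l1 l2 s t : nat) : Prop :=
  [/\ is_design v b r k,
      (forall p q : P, p != q -> lam p q = l1 \/ lam p q = l2),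
      (forall (p : P) (B : Bk), I p B ->
          #|[set q | [&& q != p, I q B & lam p q == l1]]| = s)
    & (forall (p : P) (B : Bk), ~~ I p B ->
          #|[set q | I q B && (lam p q == l1)]| = t)].

Definition quasi_symmetric (x y : nat) : Prop :=
  [/\ x < y,
      (forall B B' : Bk, B != B' -> #|binter B B'| = x \/ #|binter B B'| = y),
      (exists B B' : Bk, B != B' /\ #|binter B B'| = x)
    & (exists B B' : Bk, B != B' /\ #|binter B B'| = y)].
End Design.

(* Main.v *)
Require Import Defs.
From mathcomp Require Import all_boot.

Lemma card_sum (T : finType) (f : pred T) : #|[set p | f p]| = \sum_p (f p : nat).
Proof. by rewrite -sum1dep_card big_mkcond; apply: eq_bigr => i _; case: (f i). Qed.

Lemma meet_count (P Bk : finType) (I : P -> Bk -> bool) (r k y : nat) (B : Bk) :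
  #|[set p | I p B]| = k ->
  (forall p : P, #|[set C | I p C]| = r) ->
  (forall C, C != B -> #|binter I B C| = 0 \/ #|binter I B C| = y) ->
  y * #|[set C | (C != B) && (0 < #|binter I B C|)]| = k * (r - 1).
Proof.
move=> Hk Hr Hq.
have E1 : \sum_(C | C != B) #|binter I B C| =
          y * #|[set C | (C != B) && (0 < #|binter I B C|)]|.
  rewrite (bigID (fun C => 0 < #|binter I B C|)) /=.
  rewrite [X in _ + X]big1; last first.
    by move=> C /andP[_]; rewrite lt0n negbK => /eqP.
  rewrite addn0 mulnC -sum_nat_const.
  apply: eq_big => [C|C /andP[HC Hp]]; first by rewrite inE.
  by case: (Hq C HC) => // H; rewrite H in Hp.
have E2 : \sum_(C | C != B) #|binter I B C| = k * (r - 1).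
  rewrite (eq_bigr (fun C => \sum_p (I p B && I p C : nat))); last first.
    by move=> C _; rewrite /binter card_sum.
  rewrite exchange_big /= (bigID (fun p => I p B)) /=.
  rewrite [X in _ + X]big1; last first.
    by move=> p Hp; apply: big1 => C _; rewrite (negbTE Hp).
  rewrite addn0 -Hk -sum_nat_const.
  apply: eq_big => [p|p Hp]; first by rewrite inE.
  rewrite Hp /=.
  have := cardsD1 B [set C | I p C]; rewrite Hr inE Hp add1n => ->.
  rewrite /= subn1 /= card_sum big_mkcond /=.
  apply: eq_bigr => C _; rewrite !inE andbC.
  by case: (I p C); case: (C != B).
by rewrite -E1 E2.
Qed.

Theorem lemma4p3 (P Bk : finType) (I : P -> Bk -> bool)
    (v b r k l1 t y : nat) :
  is_SPBIBD I v b r k l1 0 (k - 1) t ->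
  quasi_symmetric I 0 y ->
  0 < y ->
  forall B : Bk, exists B1 B2 : Bk,
    [/\ B1 != B, B2 != B, #|binter I B B1| = 0 & #|binter I B B2| = y].
Proof.
move=> [[_ Hb Hk Hr _] _ _ _] [_ Hq [B0 [B0' [H0 H0']]] [C0 [C0' [Hc Hc']]]] Hy B.
have M : forall B, y * #|[set C | (C != B) && (0 < #|binter I B C|)]| = k * (r - 1).
  by move=> B'; apply: meet_count => // C HC; apply: Hq; rewrite eq_sym.
have D : forall B, #|[set C | C != B]| =
   #|[set C | (C != B) && (0 < #|binter I B C|)]| + #|[set C | (C != B) && (#|binter I B C| == 0)]|.
  move=> B'; rewrite -(cardsID [set C | 0 < #|binter I B' C|]); congr (_ + _); apply: eq_card => C;
  by rewrite !inE // -eqn0Ngt andbC.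
have Mc : forall B, #|[set C | (C != B) && (0 < #|binter I B C|)]| =
                    #|[set C | (C != B0) && (0 < #|binter I B0 C|)]|.
  by move=> B'; apply/eqP; rewrite -(eqn_pmul2l Hy) !M.
have Nc : #|[set C | C != B]| = #|[set C | C != B0]|.
  have Nc1 : forall B1 : Bk, #|[set C | C != B1]| = #|Bk|.-1 by move=> B1; rewrite -(cardC1 B1); apply: eq_card => C; rewrite !inE.
  by rewrite !Nc1.
have : 0 < #|[set C | (C != B) && (#|binter I B C| == 0)]|.
  have H1 : 0 < #|[set C | (C != B0) && (#|binter I B0 C| == 0)]|.
    by apply/card_gt0P; exists B0'; rewrite inE eq_sym H0 H0'.
  move: (D B) (D B0); rewrite Nc Mc => -> /eqP; rewrite eqn_add2l => /eqP ->.
  exact: H1.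
case/card_gt0P => B1; rewrite inE => /andP[HB1 /eqP HB1'].
have [p HpB] : exists p, I p B.
  have : 0 < #|[set p | I p B]|.
    by rewrite Hk -(Hk C0) card_gt0; apply/set0Pn;
       move: Hy; rewrite -Hc' card_gt0 => /set0Pn [p]; rewrite inE => /andP[h _]; exists p; rewrite inE.
  by case/card_gt0P => p; rewrite inE => h; exists p.
have Hr2 : 1 < r.
  move: Hy; rewrite -Hc' card_gt0 => /set0Pn [q]; rewrite inE => /andP[h1 h2].
  rewrite -(Hr q) (cardsD1 C0) inE h1 add1n ltnS card_gt0; apply/set0Pn; exists C0'.
  by rewrite !inE h2 eq_sym Hc.
have : 0 < #|[set C | I p C] :\ B|.
  by move: Hr2; rewrite -(Hr p) (cardsD1 B) inE HpB add1n ltnS.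
case/card_gt0P => B2; rewrite !inE => /andP[HB2 HpB2].
exists B1, B2; split => //.
case: (Hq B B2 _) => //; first by rewrite eq_sym.
move/eqP; rewrite cards_eq0 => /eqP E.
have : p \in binter I B B2 by rewrite inE HpB HpB2.
by rewrite E inE.
Qed.
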